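(* Let $\alpha,\beta\in\mathbb{C}$ be not both zero, let $\ell(x,y)=\alpha x+\beta y$, and let $$H(x,y)=\tfrac12 a_1x^2+a_2xy+\tfrac12 a_3y^2+a_4x+a_5y$$ with coefficients $a_1,\dots,a_5$. Consider the Hamiltonian vector field $$f(x,y)=\ell(x,y)\begin{pmatrix}\partial H/\partial y\\ -\partial H/\partial x\end{pmatrix},$$ and its Kahan map $\Phi_f$ (with step $\varepsilon=1$). Set $\gamma_1=a_2^2-a_1a_3$, $\gamma_2=a_3a_4^2+a_1a_5^2-2a_2a_4a_5$, $C(x,y)=H(x,y)-\tfrac12\gamma_2\ell^2(x,y)$, $D(x,y)=1-\gamma_1\ell^2(x,y)$, and let $\mathfrak E$ be the pencil of conics $\mathcal E_\lambda=\{(x,y): C(x,y)-\lambda D(x,y)=0\}$, where the conic $C(x,y)=0$ is assumed nonsingular. Then $$\Phi_f=I_{\mathfrak E,B_\infty}\circ I_{\mathfrak E,B_0},$$ where $B_\infty=[-\beta:\alpha:0]$ is the point at infinity of the line $\ell(x,y)=0$ and $$B_0=\rho(-\beta,\alpha),\qquad \rho=\frac{1+(\beta a_4-\alpha a_5)}{\beta^2a_1-2\alpha\beta a_2+\alpha^2a_3}$$ (both points lie on the line $\ell(x,y)=0$).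
   Context: Kahan discretization: for a quadratic vector field $f(x)=Q(x)+Bx+c$ on $\mathbb{C}^n$ (each component of $Q$ a quadratic form, $B$ a matrix, $c$ a vector), the Kahan map $\widetilde x=\Phi_f(x)$ (step $\varepsilon=1$) is defined by $\frac{\widetilde x-x}{2}=Q(x,\widetilde x)+\frac12B(x+\widetilde x)+c$, where $Q(x,\widetilde x)=\frac12(Q(x+\widetilde x)-Q(x)-Q(\widetilde x))$; explicitly $\Phi_f(x)=x+2(I-f'(x))^{-1}f(x)$ with $f'$ the Jacobi matrix. It is a birational map. Switches: for a nonsingular conic $\mathcal E$ and a point $B\notin\mathcal E$ (possibly a point at infinity of $\mathbb{C}P^2$), the $B$-switch $I_{\mathcal E,B}:\mathcal E\to\mathcal E$ sends $P\in\mathcal E$ to the second intersection point of $\mathcal E$ with the line $(BP)$. For a pencil $\mathfrak E=\{\mathcal E_\lambda\}$ of conics, the $B$-switch $I_{\mathfrak E,B}:\mathbb{C}^2\dashrightarrow\mathbb{C}^2$ is the birational map sending a non-base point $P$ to $I_{\mathcal E_\lambda,B}(P)$, where $\mathcal E_\lambda$ is the unique conic of the pencil through $P$. *)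

(* Defs.v *)
From HB Require Import structures.
From mathcomp Require Import all_boot all_algebra.
From mathcomp Require Import reals complex mpoly.
Set Implicit Arguments. Unset Strict Implicit. Unset Printing Implicit Defensive.
Import GRing.Theory.
Local Open Scope ring_scope.

(* Points of K^2 are column vectors 'cV[K]_2; coordinate x = index 0, y = index 1.
   Polynomials in (x,y) are {mpoly K[2]} with x = 'X_0, y = 'X_1. *)

Definition pt2 (K : fieldType) (x y : K) : 'cV[K]_2 :=
  \col_(i < 2) (if i == 0 :> nat then x else y).

Definition pev (K : fieldType) (p : {mpoly K[2]}) (P : 'cV[K]_2) : K :=
  p.@[fun i => P i 0].

Definition vfield (K : fieldType) := 'I_2 -> {mpoly K[2]}.

Definition vf_eval (K : fieldType) (f : vfield K) (P : 'cV[K]_2) : 'cV[K]_2 :=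
  \col_(i < 2) pev (f i) P.

Definition jacobi (K : fieldType) (f : vfield K) (P : 'cV[K]_2) : 'M[K]_2 :=
  \matrix_(i < 2, j < 2) pev (mderiv j (f i)) P.

(* Kahan map (step 1): Phi_f(x) = x + 2 (I - f'(x))^{-1} f(x), defined where
   I - f'(x) is invertible. *)
Definition kahan_defined (K : fieldType) (f : vfield K) (P : 'cV[K]_2) : bool :=
  (1%:M - jacobi f P) \in unitmx.

Definition kahan (K : fieldType) (f : vfield K) (P : 'cV[K]_2) : 'cV[K]_2 :=
  P + 2%:R *: (invmx (1%:M - jacobi f P) *m vf_eval f P).

(* Symmetric 3x3 matrix of (the homogenization of) a polynomial q of degree <= 2:
   for q = A x^2 + 2B xy + C y^2 + 2D x + 2E y + F it is [[A,B,D],[B,C,E],[D,E,F]]. *)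
Definition conic_matrix (K : fieldType) (q : {mpoly K[2]}) : 'M[K]_3 :=
  \matrix_(i < 3, j < 3)
    match split (i : 'I_(2 + 1)), split (j : 'I_(2 + 1)) with
    | inl i', inl j' => 2%:R^-1 * pev (mderiv i' (mderiv j' q)) 0
    | inl i', inr _  => 2%:R^-1 * pev (mderiv i' q) 0
    | inr _, inl j'  => 2%:R^-1 * pev (mderiv j' q) 0
    | inr _, inr _   => pev q 0
    end.

Definition conic_nonsingular (K : fieldType) (q : {mpoly K[2]}) : Prop :=
  \det (conic_matrix q) != 0.

(* Q is the second intersection point of the conic {X | q X = 0} with the line
   through P (a point of the conic) with direction v: the restriction of q to
   the line s |-> P + s v is a genuine quadratic k s (s - t) (both intersection
   points finite, line not contained in the conic), and Q = P + t v. *)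
Definition second_point (K : fieldType) (q : {mpoly K[2]}) (P v Q : 'cV[K]_2)
  : Prop :=
  exists k t : K, [/\ k != 0, Q = P + t *: v &
                      forall s : K, pev q (P + s *: v) = k * s * (s - t)].

(* The conic of the pencil {C - lambda D = 0} through P (P not a base point):
   D(P) C - C(P) D = 0  (lambda = C(P)/D(P), lambda = oo allowed). *)
Definition pencil_conic (K : fieldType) (C D : {mpoly K[2]}) (P : 'cV[K]_2)
  : {mpoly K[2]} := pev D P *: C - pev C P *: D.

Definition not_base_point (K : fieldType) (C D : {mpoly K[2]}) (P : 'cV[K]_2)
  : Prop := ~ (pev C P = 0 /\ pev D P = 0).

Definition pencil_switch_fin (K : fieldType) (C D : {mpoly K[2]})
  (B P Q : 'cV[K]_2) : Prop :=
  [/\ not_base_point C D P,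
      conic_nonsingular (pencil_conic C D P),
      pev (pencil_conic C D P) B != 0
    & second_point (pencil_conic C D P) P (P - B) Q].

(* B-switch of the pencil, for the point at infinity B = [v0 : v1 : 0]
   (v <> 0); lines through B are the lines with direction v.  B not on the
   conic is equivalent to k <> 0 in second_point (k = quadratic part at v). *)
Definition pencil_switch_inf (K : fieldType) (C D : {mpoly K[2]})
  (v P Q : 'cV[K]_2) : Prop :=
  [/\ not_base_point C D P,
      conic_nonsingular (pencil_conic C D P),
      v != 0
    & second_point (pencil_conic C D P) P v Q].

Section Objects.
Variable K : fieldType.
Variables (alpha beta a1 a2 a3 a4 a5 : K).

Definition ell : {mpoly K[2]} := alpha *: 'X_(0 : 'I_2) + beta *: 'X_(1 : 'I_2).

Definition Ham : {mpoly K[2]} :=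
  (2%:R^-1 * a1) *: 'X_(0 : 'I_2) ^+ 2 + a2 *: ('X_(0 : 'I_2) * 'X_(1 : 'I_2))
  + (2%:R^-1 * a3) *: 'X_(1 : 'I_2) ^+ 2
  + a4 *: 'X_(0 : 'I_2) + a5 *: 'X_(1 : 'I_2).

Definition ham_field : vfield K := fun i =>
  if i == 0 :> nat then ell * mderiv (1 : 'I_2) Ham
  else - (ell * mderiv (0 : 'I_2) Ham).

Definition gamma1 : K := a2 ^+ 2 - a1 * a3.
Definition gamma2 : K := a3 * a4 ^+ 2 + a1 * a5 ^+ 2 - 2%:R * a2 * a4 * a5.

Definition Cpol : {mpoly K[2]} := Ham - (2%:R^-1 * gamma2) *: ell ^+ 2.
Definition Dpol : {mpoly K[2]} := 1 - gamma1 *: ell ^+ 2.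

Definition rho_den : K :=
  beta ^+ 2 * a1 - 2%:R * alpha * beta * a2 + alpha ^+ 2 * a3.
Definition rho : K := (1 + (beta * a4 - alpha * a5)) / rho_den.

(* B_0 = rho (-beta, alpha);  B_oo = [-beta : alpha : 0] (direction (-beta, alpha)) *)
Definition B0 : 'cV[K]_2 := rho *: pt2 (- beta) alpha.
Definition Binf_dir : 'cV[K]_2 := pt2 (- beta) alpha.

End Objects.

(* Main.v *)
Require Import Defs.
From HB Require Import structures.
From mathcomp Require Import all_boot all_algebra.
From mathcomp Require Import reals complex mpoly.
From mathcomp Require Import ring.
Import GRing.Theory Num.Theory.
Local Open Scope ring_scope.
Section S.
Variable K : fieldType.
Variable h2 : (2%:R : K) != 0.
Lemma mderivXU (i j : 'I_2) : mderiv i ('X_j : {mpoly K[2]}) = ((j == i)%:R)%:MP.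
Proof.
rewrite mderivX mnm1E; case: eqP => [->|_].
  have -> : (U_(i) - U_(i) = 0)%MM by apply/mnmP=> k; rewrite mnmBE subnn mnm0E.
  by rewrite mpolyX0 scale1r mpolyC1.
by rewrite scale0r mpolyC0.
Qed.
Variables alpha beta a1 a2 a3 a4 a5 : K.
Definition ellS (x y : K) := alpha * x + beta * y.
Definition HS (x y : K) := 2%:R^-1 * a1 * x^+2 + a2 * x * y + 2%:R^-1 * a3 * y^+2 + a4 * x + a5 * y.
Definition CS x y := HS x y - 2%:R^-1 * gamma2 a1 a2 a3 a4 a5 * (ellS x y)^+2.
Definition DS x y := 1 - gamma1 a1 a2 a3 * (ellS x y)^+2.

Ltac pevsimp := rewrite /pev ?(mevalD, mevalB, mevalN, mevalZ, mevalM, mevalXU, mevalC, meval1) /=.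

Lemma pevD (p q : {mpoly K[2]}) Z a b : pev p Z = a -> pev q Z = b -> pev (p + q) Z = a + b.
Proof. by move=> <- <-; exact: mevalD. Qed.
Lemma pevN (p : {mpoly K[2]}) Z a : pev p Z = a -> pev (- p) Z = - a.
Proof. by move=> <-; exact: mevalN. Qed.
Lemma pevZ c (p : {mpoly K[2]}) Z a : pev p Z = a -> pev (c *: p) Z = c * a.
Proof. by move=> <-; exact: mevalZ. Qed.
Lemma pevM (p q : {mpoly K[2]}) Z a b : pev p Z = a -> pev q Z = b -> pev (p * q) Z = a * b.
Proof. by move=> <- <-; exact: mevalM. Qed.
Lemma pevE2 (p : {mpoly K[2]}) Z a : pev p Z = a -> pev (p ^+ 2) Z = a * a.
Proof. by move=> <-; rewrite expr2; exact: mevalM. Qed.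
Lemma pevX i (Z : 'cV[K]_2) : pev ('X_i : {mpoly K[2]}) Z = Z i 0. Proof. exact: mevalXU. Qed.
Lemma pevC (c : K) Z : pev c%:MP Z = c. Proof. exact: mevalC. Qed.
Lemma pev1 (Z : 'cV[K]_2) : pev (1 : {mpoly K[2]}) Z = 1. Proof. exact: meval1. Qed.

Ltac pev_solve := lazymatch goal with
 | |- pev (_ + _) _ = _ => apply: pevD; pev_solve
 | |- pev (- _) _ = _ => apply: pevN; pev_solve
 | |- pev (_ *: _) _ = _ => apply: pevZ; pev_solve
 | |- pev (_ * _) _ = _ => apply: pevM; pev_solve
 | |- pev (_ ^+ 2) _ = _ => apply: pevE2; pev_solve
 | |- pev ('X_ _) _ = _ => apply: pevX
 | |- pev (_%:MP) _ = _ => apply: pevC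
 | |- pev 1 _ = _ => apply: pev1
end.
Ltac pev_eval := etransitivity; [pev_solve|].

Ltac fld := field; rewrite ?h2 //.
Lemma mdD j (p q a b : {mpoly K[2]}) : mderiv j p = a -> mderiv j q = b -> mderiv j (p + q) = a + b.
Proof. by move=> <- <-; rewrite mderivD. Qed.
Lemma mdN j (p a : {mpoly K[2]}) : mderiv j p = a -> mderiv j (- p) = - a.
Proof. by move=> <-; rewrite mderivN. Qed.
Lemma mdZ j c (p a : {mpoly K[2]}) : mderiv j p = a -> mderiv j (c *: p) = c *: a.
Proof. by move=> <-; rewrite mderivZ. Qed.
Lemma mdM j (p q a b : {mpoly K[2]}) : mderiv j p = a -> mderiv j q = b -> mderiv j (p * q) = a * q + p * b.
Proof. by move=> <- <-; rewrite mderivM. Qed.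
Lemma mdE2 j (p a : {mpoly K[2]}) : mderiv j p = a -> mderiv j (p ^+ 2) = a * p + p * a.
Proof. by move=> <-; rewrite expr2 mderivM. Qed.
Lemma mdX j i : mderiv j ('X_i : {mpoly K[2]}) = ((i == j)%:R)%:MP.
Proof. exact: mderivXU. Qed.
Lemma mdC j (c : K) : mderiv j (c%:MP : {mpoly K[2]}) = 0.
Proof. exact: mderivC. Qed.
Lemma md1 j : mderiv j (1 : {mpoly K[2]}) = 0.
Proof. by rewrite -mpolyC1 mderivC. Qed.
Lemma mdmd j i (p q r : {mpoly K[2]}) : mderiv i p = q -> mderiv j q = r -> mderiv j (mderiv i p) = r.
Proof. by move=> <-. Qed.
Lemma pev_md j (p q : {mpoly K[2]}) Z a : mderiv j p = q -> pev q Z = a -> pev (mderiv j p) Z = a.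
Proof. by move=> <-. Qed.
Lemma pev0 (Z : 'cV[K]_2) : pev (0 : {mpoly K[2]}) Z = 0. Proof. exact: meval0. Qed.

Ltac md_solve := lazymatch goal with
 | |- mderiv _ (_ + _) = _ => apply: mdD; md_solve
 | |- mderiv _ (- _) = _ => apply: mdN; md_solve
 | |- mderiv _ (_ *: _) = _ => apply: mdZ; md_solve
 | |- mderiv _ (_ * _) = _ => apply: mdM; md_solve
 | |- mderiv _ (_ ^+ 2) = _ => apply: mdE2; md_solve
 | |- mderiv _ ('X_ _) = _ => apply: mdX
 | |- mderiv _ (_%:MP) = _ => apply: mdC
 | |- mderiv _ 1 = _ => apply: md1
 | |- mderiv _ (mderiv _ _) = _ => apply: mdmd; md_solve
end.
Ltac pev_solve ::= lazymatch goal with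
 | |- pev (_ + _) _ = _ => apply: pevD; pev_solve
 | |- pev (- _) _ = _ => apply: pevN; pev_solve
 | |- pev (_ *: _) _ = _ => apply: pevZ; pev_solve
 | |- pev (_ * _) _ = _ => apply: pevM; pev_solve
 | |- pev (_ ^+ 2) _ = _ => apply: pevE2; pev_solve
 | |- pev ('X_ _) _ = _ => apply: pevX
 | |- pev (_%:MP) _ = _ => apply: pevC
 | |- pev 1 _ = _ => apply: pev1
 | |- pev 0 _ = _ => apply: pev0
 | |- pev (mderiv _ _) _ = _ => apply: pev_md; [md_solve|pev_solve]
end.
Ltac pd_eval := pev_eval.

Lemma pev_C Z : pev (Cpol alpha beta a1 a2 a3 a4 a5) Z = CS (Z 0 0) (Z 1 0).
Proof. rewrite /Cpol /Ham /ell; pev_eval; rewrite /CS /HS /ellS; fld. Qed.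
Lemma pev_D Z : pev (Dpol alpha beta a1 a2 a3) Z = DS (Z 0 0) (Z 1 0).
Proof. rewrite /Dpol /ell; pev_eval; rewrite /DS /ellS; ring. Qed.
Lemma pev_pc (C D : {mpoly K[2]}) P Z : pev (pencil_conic C D P) Z = pev D P * pev C Z - pev C P * pev D Z.
Proof. by rewrite /pencil_conic /pev mevalB !mevalZ. Qed.

Definition Fx (x y : K) := a1 * x + a2 * y + a4.
Definition Fy (x y : K) := a2 * x + a3 * y + a5.

Lemma f_eval P (i : 'I_2) : pev (ham_field alpha beta a1 a2 a3 a4 a5 i) P =
  if i == 0 :> nat then ellS (P 0 0) (P 1 0) * Fy (P 0 0) (P 1 0)
  else - (ellS (P 0 0) (P 1 0) * Fx (P 0 0) (P 1 0)).
Proof.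
rewrite /ham_field; case: ifP => _; rewrite /Ham /ell /ellS /Fx /Fy.
  pev_eval; simpl; fld.
apply: pevN; pev_eval; simpl; fld.
Qed.
Lemma ord2P (i : 'I_2) : i = 0 \/ i = 1.
Proof. by case: i => [[|[|//]] Hi]; [left|right]; apply/val_inj. Qed.
Lemma jac_eval P (i j : 'I_2) : pev (mderiv j (ham_field alpha beta a1 a2 a3 a4 a5 i)) P =
  if i == 0 :> nat then
    if j == 0 :> nat then alpha * Fy (P 0 0) (P 1 0) + ellS (P 0 0) (P 1 0) * a2
    else beta * Fy (P 0 0) (P 1 0) + ellS (P 0 0) (P 1 0) * a3
  else
    if j == 0 :> nat then - (alpha * Fx (P 0 0) (P 1 0) + ellS (P 0 0) (P 1 0) * a1)
    else - (beta * Fx (P 0 0) (P 1 0) + ellS (P 0 0) (P 1 0) * a2).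
Proof.
rewrite /ham_field /Ham /ell /ellS /Fx /Fy; case: (ord2P i) => ->; case: (ord2P j) => -> /=;
  pev_eval; simpl; fld.
Qed.
Lemma pc_eval' (C D : {mpoly K[2]}) (fC fD : 'cV[K]_2 -> K) :
  (forall Z, pev C Z = fC Z) -> (forall Z, pev D Z = fD Z) ->
  forall P Z, pev (pencil_conic C D P) Z = fD P * fC Z - fC P * fD Z.
Proof. by move=> hC hD P Z; rewrite pev_pc !hC !hD. Qed.
Lemma colD (A B : 'cV[K]_2) i j : (A + B) i j = A i j + B i j. Proof. by rewrite mxE. Qed.
Lemma colB (A B : 'cV[K]_2) i j : (A - B) i j = A i j - B i j. Proof. by rewrite !mxE. Qed.
Lemma colZ c (A : 'cV[K]_2) i j : (c *: A) i j = c * A i j. Proof. by rewrite mxE. Qed.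
Lemma pt2_0 (x y : K) : pt2 x y 0 0 = x. Proof. by rewrite mxE. Qed.
Lemma pt2_1 (x y : K) : pt2 x y 1 0 = y. Proof. by rewrite mxE. Qed.
Lemma entAS (A B : 'cV[K]_2) s i j : (A + s *: B) i j = A i j + s * B i j. Proof. by rewrite !mxE. Qed.
Lemma mul2E (A : 'M[K]_2) (X : 'cV[K]_2) i : (A *m X) i 0 = A i 0 * X 0 0 + A i 1 * X 1 0.
Proof.
rewrite mxE !big_ord_recl big_ord0 addr0.
have -> : (ord0 : 'I_2) = 0 by apply/val_inj.
by have -> : (lift ord0 ord0 : 'I_2) = 1 by apply/val_inj.
Qed.
Lemma entIJ (M : 'M[K]_2) i j : (1%:M - M) i j = (i == j)%:R - M i j. Proof. by rewrite !mxE. Qed.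
Lemma jacE (f : vfield K) P i j : jacobi f P i j = pev (mderiv j (f i)) P. Proof. by rewrite mxE. Qed.
Lemma vfE (f : vfield K) P i : vf_eval f P i 0 = pev (f i) P. Proof. by rewrite mxE. Qed.
Lemma entZ c (A : 'cV[K]_2) i j : (c *: A) i j = c * A i j. Proof. by rewrite mxE. Qed.
Definition gS (u0 u1 : K) := Fx u0 u1 * (- beta) + Fy u0 u1 * alpha.
Lemma lin_comb (a b e1 e2 c1 c2 : K) : e1 = 0 -> e2 = 0 -> a - b = c1 * e1 + c2 * e2 -> a = b.
Proof. by move=> -> ->; rewrite !mulr0 addr0 => /eqP; rewrite subr_eq0 => /eqP. Qed.
Lemma main_gen : rho_den alpha beta a1 a2 a3 != 0 ->
  forall P Q1 Q2 : 'cV[K]_2,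
    kahan_defined (ham_field alpha beta a1 a2 a3 a4 a5) P ->
    pencil_switch_fin (Cpol alpha beta a1 a2 a3 a4 a5)
      (Dpol alpha beta a1 a2 a3) (B0 alpha beta a1 a2 a3 a4 a5) P Q1 ->
    pencil_switch_inf (Cpol alpha beta a1 a2 a3 a4 a5)
      (Dpol alpha beta a1 a2 a3) (Binf_dir alpha beta) Q1 Q2 ->
    kahan (ham_field alpha beta a1 a2 a3 a4 a5) P = Q2.
Proof.
move=> hrd P Q1 Q2 hK [_ _ _ [k [t [hk0 hQ1 hq1]]]] [_ _ _ [k2 [t2 [hk20 hQ2 hq2]]]].
set W := Binf_dir alpha beta in hQ2 hq2 *.
have hW0 : W 0 0 = - beta by rewrite /W /Binf_dir pt2_0.
have hW1 : W 1 0 = alpha by rewrite /W /Binf_dir pt2_1.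
set B := B0 alpha beta a1 a2 a3 a4 a5 in hQ1 hq1 *.
have hB0 : B 0 0 = rho alpha beta a1 a2 a3 a4 a5 * - beta by rewrite /B /B0 colZ pt2_0.
have hB1 : B 1 0 = rho alpha beta a1 a2 a3 a4 a5 * alpha by rewrite /B /B0 colZ pt2_1.
clearbody W B.
have hpc := @pc_eval' _ _ _ _ pev_C pev_D.
have e3 := hq2 1; have e4 := hq2 (-1).
rewrite hpc in e3; rewrite hpc in e4.
rewrite !entAS !hW0 !hW1 in e3 e4.
move/eqP: e3; rewrite -subr_eq0 => /eqP e3.
move/eqP: e4; rewrite -subr_eq0 => /eqP e4.
have hk2 : k2 = DS (Q1 0 0) (Q1 1 0) * rho_den alpha beta a1 a2 a3 / 2%:R.
  apply: (@lin_comb _ _ _ _ (- 2%:R^-1) (- 2%:R^-1) e3 e4).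
  rewrite /CS /DS /HS /ellS /gamma1 /gamma2 /rho_den; field; rewrite ?h2 //.
have hk2t2 : k2 * t2 = - DS (Q1 0 0) (Q1 1 0) * gS (Q1 0 0) (Q1 1 0).
  apply: (@lin_comb _ _ _ _ (2%:R^-1) (- 2%:R^-1) e3 e4).
  rewrite /CS /DS /HS /ellS /gamma1 /gamma2 /gS /Fx /Fy; field; rewrite ?h2 //.
have ht2 : t2 = - 2%:R * gS (Q1 0 0) (Q1 1 0) / rho_den alpha beta a1 a2 a3.
  apply/eqP; rewrite -subr_eq0; apply/eqP.
  have : k2 * (t2 - - 2%:R * gS (Q1 0 0) (Q1 1 0) / rho_den alpha beta a1 a2 a3) = 0.
    rewrite mulrBr hk2t2 {1}hk2; field; rewrite ?h2 ?hrd //.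
  by move/eqP; rewrite mulf_eq0 (negbTE hk20) /= => /eqP.
clear e3 e4 hk2 hk2t2 hq2.
have e1 := hq1 1; have e2 := hq1 (-1).
rewrite hpc in e1; rewrite hpc in e2.
rewrite !entAS !colB !hB0 !hB1 in e1 e2.
move: e1; set A1 := (X in X = _) => e1.
move: e2; set A2 := (X in X = _) => e2.
have hA : A1 + A2 = 2%:R * k by rewrite e1 e2; ring.
have hA0 : A1 + A2 != 0 by rewrite hA mulf_neq0.
have ht : t = (A2 - A1) / (A1 + A2) by rewrite hA e1 e2; field; rewrite ?h2 ?hk0.
clear e1 e2 hA hq1.
rewrite /kahan.
suff key : (1%:M - jacobi (ham_field alpha beta a1 a2 a3 a4 a5) P) *m (Q2 - P) = 2%:R *: vf_eval (ham_field alpha beta a1 a2 a3 a4 a5) P.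
  by rewrite scalemxAr -key (mulKmx hK) addrC subrK.
apply/matrixP => i j; rewrite (ord1 j) mul2E !entIJ !jacE entZ vfE !jac_eval f_eval.
rewrite !colB hQ2 !entAS !hW0 !hW1 ht2 hQ1 !entAS !colB !hB0 !hB1.
move: hA0; rewrite ht /A1 /A2; clear ht A1 A2.
rewrite /CS /DS /HS /gS /ellS /Fx /Fy /gamma1 /gamma2 /rho /rho_den.
move: (P 0 0) (P 1 0) => x y hA0.
move: hrd; rewrite /rho_den => hrd.
case: (ord2P i) => -> /=; field; apply/and3P; split => //;
 lazymatch goal with |- is_true (?E != 0) => lazymatch type of hA0 with is_true (?S != 0) =>
   have -> : E = 2%:R * (beta ^+ 2 * a1 - 2%:R * alpha * beta * a2 + alpha ^+ 2 * a3) ^+ 2 * S by field; rewrite ?h2 ?hrd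
 end end; rewrite !mulf_neq0 ?expf_neq0 //.
Qed.
End S.
Theorem theorem2 (R : realType) (alpha beta a1 a2 a3 a4 a5 : R[i]) :
  (alpha != 0) || (beta != 0) ->
  conic_nonsingular (Cpol alpha beta a1 a2 a3 a4 a5) ->
  rho_den alpha beta a1 a2 a3 != 0 ->
  forall P Q1 Q2 : 'cV[R[i]]_2,
    kahan_defined (ham_field alpha beta a1 a2 a3 a4 a5) P ->
    pencil_switch_fin (Cpol alpha beta a1 a2 a3 a4 a5)
      (Dpol alpha beta a1 a2 a3) (B0 alpha beta a1 a2 a3 a4 a5) P Q1 ->
    pencil_switch_inf (Cpol alpha beta a1 a2 a3 a4 a5)
      (Dpol alpha beta a1 a2 a3) (Binf_dir alpha beta) Q1 Q2 ->
    kahan (ham_field alpha beta a1 a2 a3 a4 a5) P = Q2.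
Proof.
move=> _ _ hrd; apply: main_gen hrd.
have h : (2%:R : R[i]) != 0 by rewrite pnatr_eq0.
exact: h.
Qed.
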